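(* Let $G$ be a block graph whose blocks are the cliques $K_{n_1},\dots,K_{n_r}$. Then $G$ admits a weak IASI and its sparing number is $\varphi(G)=\frac{1}{2}\sum_{i=1}^r (n_i-1)(n_i-2)$.
   Context: A block graph (clique tree) is a connected graph in which every block (maximal 2-connected subgraph or bridge) is a clique; here $r$ is the number of these cliques and $n_i$ the order of the $i$-th one. Let $\mathbb{N}_0$ be the set of non-negative integers; for $A,B\subseteq\mathbb{N}_0$, $A+B=\{a+b:a\in A,b\in B\}$. An integer additive set-indexer (IASI) of a graph $G$ is an injective map $f:V(G)\to\mathcal{P}(\mathbb{N}_0)$ such that $f^+:E(G)\to\mathcal{P}(\mathbb{N}_0)$, $f^+(uv)=f(u)+f(v)$, is injective. A weak IASI is an IASI with $|f^+(uv)|=\max(|f(u)|,|f(v)|)$ for every edge $uv$. An edge $e$ is mono-indexed if $|f^+(e)|=1$. The sparing number $\varphi(G)$ is the minimum number of mono-indexed edges over all weak IASIs of $G$. *)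

(* Defs.v *)
From HB Require Import structures.
From mathcomp Require Import all_boot.
From mathcomp Require Import finmap.
Set Implicit Arguments. Unset Strict Implicit. Unset Printing Implicit Defensive.
Local Open Scope fset_scope.

(* Simple graphs: T : finType, e : rel T symmetric and irreflexive. *)

Definition restr (T : finType) (e : rel T) (S : {set T}) : rel T :=
  [rel x y | [&& x \in S, y \in S & e x y]].

(* G[S] is connected (the empty vertex set is vacuously connected) *)
Definition induced_connected (T : finType) (e : rel T) (S : {set T}) : bool :=
  [forall x in S, forall y in S, connect (restr e S) x y].

Definition nonseparable (T : finType) (e : rel T) (S : {set T}) : bool :=
  [&& S != set0, induced_connected e S &
      [forall v in S, induced_connected e (S :\ v)]].

Definition is_block (T : finType) (e : rel T) (B : {set T}) : bool :=
  nonseparable e B &&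
  [forall S : {set T}, (B \subset S) && nonseparable e S ==> (S == B)].

Definition is_clique (T : finType) (e : rel T) (B : {set T}) : bool :=
  [forall x in B, forall y in B, (x != y) ==> e x y].

Definition block_graph (T : finType) (e : rel T) : Prop :=
  (forall x y : T, connect e x y) /\
  (forall B : {set T}, is_block e B -> is_clique e B).

Definition sumset (A B : {fset nat}) : {fset nat} :=
  [fset (a + b)%N | a in A, b in B].

Definition IASI (T : finType) (e : rel T) (f : T -> {fset nat}) : Prop :=
  injective f /\
  (forall u v x y, e u v -> e x y ->
     sumset (f u) (f v) = sumset (f x) (f y) -> [set u; v] = [set x; y]).

Definition weak_IASI (T : finType) (e : rel T) (f : T -> {fset nat}) : Prop :=
  IASI e f /\
  (forall u v, e u v -> #|` sumset (f u) (f v)| = maxn #|` f u| #|` f v|).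

(* number of mono-indexed edges (edges are unordered pairs {u, v}) *)
Definition mono_count (T : finType) (e : rel T) (f : T -> {fset nat}) : nat :=
  #|[set [set u; v] | u in T, v in T & e u v && (#|` sumset (f u) (f v)| == 1%N)]|.

Definition is_sparing_number (T : finType) (e : rel T) (k : nat) : Prop :=
  (exists f, weak_IASI e f /\ mono_count e f = k) /\
  (forall f, weak_IASI e f -> (k <= mono_count e f)%N).

(* Main.v *)
Require Import Defs.
From HB Require Import structures.
From mathcomp Require Import all_boot.
From mathcomp Require Import finmap.
From mathcomp Require Import zify.
Set Implicit Arguments. Unset Strict Implicit. Unset Printing Implicit Defensive.

Lemma restr_sym (T : finType) (e : rel T) (S : {set T}) : symmetric e -> symmetric (restr e S).
Proof. by move=> es x y; rewrite /restr /= es andbCA. Qed.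

Lemma rstep (T : finType) (e : rel T) (S : {set T}) x y :
  x \in S -> y \in S -> e x y -> connect (restr e S) x y.
Proof. by move=> xS yS exy; apply: connect1; rewrite /restr /= xS yS. Qed.

Lemma hub_conn (T : finType) (e : rel T) (S : {set T}) h : symmetric e ->
  (forall y, y \in S -> connect (restr e S) y h) -> induced_connected e S.
Proof.
move=> es H; apply/forallP=> x; apply/implyP=> xS; apply/forallP=> y; apply/implyP=> yS.
apply: connect_trans (H x xS) _.
by rewrite (sym_connect_sym (restr_sym S es)); apply: H.
Qed.

Lemma cliqueP (T : finType) (e : rel T) (B : {set T}) x y :
  is_clique e B -> x \in B -> y \in B -> x != y -> e x y.
Proof.
move=> /forallP/(_ x)/implyP H xB yB; move: (H xB) => /forallP/(_ y)/implyP H2.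
by move/(_ yB): H2 => /implyP.
Qed.

Lemma union_nonsep (T : finType) (e : rel T) (B1 B2 : {set T}) v x x' :
  symmetric e -> is_clique e B1 -> is_clique e B2 ->
  v \in B1 -> v \in B2 -> x \in B1 -> x' \in B2 -> x != v -> x' != v ->
  (x == x') || e x x' -> nonseparable e (B1 :|: B2).
Proof.
move=> es c1 c2 v1 v2 x1 x2 xv x'v xx.
have hubv : forall W : {set T}, v \in W -> W \subset B1 :|: B2 ->
    induced_connected e W.
  move=> W vW WU; apply: (hub_conn (h := v)) => // y yW.
  have [->|yv] := eqVneq y v; first exact: connect0.
  apply: rstep => //; move/subsetP: WU => /(_ y yW); rewrite inE => /orP [yB|yB].
    exact: (cliqueP c1).
  exact: (cliqueP c2).
apply/and3P; split.
- by apply/set0Pn; exists v; rewrite inE v1.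
- by apply: hubv; [rewrite inE v1 | exact: subxx].
apply/forallP=> w; apply/implyP=> wU.
have [wv|wv] := eqVneq w v; last first.
  apply: hubv; first by rewrite !inE eq_sym wv v1.
  exact: subD1set.
subst w.
have xS : x \in (B1 :|: B2) :\ v by rewrite !inE xv x1.
have x'S : x' \in (B1 :|: B2) :\ v by rewrite !inE x'v x2 orbT.
apply: (hub_conn (h := x)) => // y; rewrite !inE => /andP [yv /orP [yB|yB]].
  have [->|yx] := eqVneq y x; first exact: connect0.
  by apply: rstep => //; [rewrite !inE yv yB | exact: (cliqueP c1)].
have yS : y \in (B1 :|: B2) :\ v by rewrite !inE yv yB orbT.
have x'x : connect (restr e ((B1 :|: B2) :\ v)) x' x.
  case/orP: xx => [/eqP ->|exx]; first exact: connect0.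
  by apply: rstep => //; rewrite es.
have [->|yx'] := eqVneq y x'; first exact: x'x.
apply: connect_trans x'x; apply: rstep => //; exact: (cliqueP c2).
Qed.

Lemma block_ext (T : finType) (e : rel T) (C : {set T}) :
  nonseparable e C -> exists2 B, is_block e B & C \subset B.
Proof.
move=> nC.
pose P := (fun S : {set T} => (C \subset S) && nonseparable e S).
have PC : P C by rewrite /P subxx nC.
have [B] := @maxset_exists _ P C PC.
move=> /maxsetP [/andP [CB nB] maxB] _; exists B => //.
apply/andP; split=> //; apply/forallP=> S; apply/implyP=> /andP [BS nS].
by apply/eqP; apply: maxB => //; rewrite /P (subset_trans CB BS) nS.
Qed.

Lemma block_eq (T : finType) (e : rel T) (B1 B2 : {set T}) v x x' :
  symmetric e -> block_graph e -> is_block e B1 -> is_block e B2 ->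
  v \in B1 -> v \in B2 -> x \in B1 -> x' \in B2 -> x != v -> x' != v ->
  (x == x') || e x x' -> B1 = B2.
Proof.
move=> es [_ hc] b1 b2 v1 v2 x1 x2 xv x'v xx.
have nU := union_nonsep es (hc _ b1) (hc _ b2) v1 v2 x1 x2 xv x'v xx.
move: b1 b2 => /andP [_ /forallP m1] /andP [_ /forallP m2].
have /implyP/(_ _)/eqP E1 := m1 (B1 :|: B2).
have /implyP/(_ _)/eqP E2 := m2 (B1 :|: B2).
by rewrite -E1 ?subsetUl ?nU // -[RHS]E2 ?subsetUr ?nU.
Qed.

Lemma edge_block (T : finType) (e : rel T) u v :
  symmetric e -> irreflexive e -> block_graph e -> e u v ->
  exists2 B, is_block e B & (u \in B) && (v \in B).
Proof.
move=> es ei hG euv.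
have vu : v != u by apply/eqP=> vu; move: euv; rewrite vu ei.
have cl : is_clique e [set u; v].
  apply/forallP=> a; apply/implyP=> aS; apply/forallP=> b; apply/implyP=> bS.
  apply/implyP=> ab.
  by move: aS bS ab; rewrite !inE => /orP [] /eqP -> /orP [] /eqP ->;
    rewrite ?eqxx // es.
have := union_nonsep es cl cl (v := u) (x := v) (x' := v).
rewrite !inE !eqxx orbT /= setUid => /(_ isT isT isT isT vu vu isT) /block_ext.
by case=> B bB /subsetP sB; exists B => //; rewrite !sB // !inE eqxx ?orbT.
Qed.


Lemma seq_conn (T : finType) (e : rel T) (S : {set T}) (s : seq T) y z :
  symmetric e -> sorted e s -> {subset s <= S} -> y \in s -> z \in s ->
  connect (restr e S) y z.
Proof.
case: s => [//|h t] es pth sub yin zin.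
have pr : path (restr e S) h t.
  apply: (sub_in_path (P := [in S])) pth; last by apply/allP=> w /sub.
  by move=> a b aS bS eab; rewrite /restr /= aS bS.
apply: (connect_trans (y := h)); last exact: (path_connect pr zin).
by rewrite (sym_connect_sym (restr_sym S es)); exact: (path_connect pr yin).
Qed.

Lemma cycle_nonsep (T : finType) (e : rel T) v a q :
  symmetric e -> path e a q -> uniq (a :: q) -> v \notin a :: q ->
  e v a -> e v (last a q) -> nonseparable e (v |: [set y | y \in a :: q]).
Proof.
move=> es pth uq vq eva evb.
set C := v |: _.
have memC : forall z, (z \in C) = (z == v) || (z \in a :: q).
  by move=> z; rewrite /C in_setU1 in_set.
have vC : v \in C by rewrite memC eqxx.
have qC : {subset a :: q <= C} by move=> y yq; rewrite memC yq orbT.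
have aC : a \in C by apply: qC; rewrite mem_head.
have hubv : forall w, w \in a :: q -> w != v -> forall y, y \in C :\ w ->
   (exists2 z, z \in C :\ w & e v z /\ connect (restr e (C :\ w)) y z) ->
   connect (restr e (C :\ w)) y v.
  move=> w wq wv y yC [z zC [evz yz]]; apply: connect_trans yz _.
  by apply: rstep => //; [rewrite in_setD1 eq_sym wv vC | rewrite es].
apply/and3P; split.
- by apply/set0Pn; exists v.
- apply: (hub_conn (h := v)) => // y; rewrite memC => /orP [/eqP ->|yq].
    exact: connect0.
  apply: connect_trans (_ : connect _ y a) _.
    by apply: (seq_conn (s := a :: q)) => //; rewrite mem_head.
  by apply: rstep => //; rewrite es.
apply/forallP=> w; apply/implyP; rewrite memC => /orP [/eqP wv|wq].
  subst w; apply: (hub_conn (h := a)) => // y.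
    rewrite in_setD1 memC => /andP [yv /orP [/eqP yv'|yq]].
    by rewrite yv' eqxx in yv.
  apply: (seq_conn (s := a :: q)) => //; last by rewrite mem_head.
  move=> z zq; rewrite in_setD1 memC zq orbT andbT; apply/eqP=> zv; subst z.
  by rewrite zq in vq.
have wv : w != v by apply/eqP=> wv; subst w; rewrite wq in vq.
apply: (hub_conn (h := v)) => // y yC.
have [yv|yv] := eqVneq y v; first by rewrite yv; exact: connect0.
move: yC; rewrite in_setD1 memC (negbTE yv) /= => /andP [yw yq].
move: pth uq; rewrite -/(sorted e (a :: q)) => srt uq.
have lastE : last a q = last a (a :: q) by [].
move: evb; rewrite lastE.
move: wq yq srt uq qC; move Eq: (a :: q) => s wq yq srt uq qC evb.
case/splitPr: yq Eq wq srt uq qC evb => s1 s2 Eq wq srt uq qC evb.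
move: uq; rewrite cat_uniq /= => /and4P [_ /norP [ys1 hs1] ys2 us2].
move: wq; rewrite mem_cat inE => /orP [ws1|/orP [/eqP wy|ws2]]; [|by rewrite wy eqxx in yw|].
  (* use suffix y :: s2, ending at b *)
  have ws2 : w \notin y :: s2.
    rewrite inE negb_or eq_sym yw /=; apply: contra hs1 => ws2.
    by apply/hasP; exists w.
  apply: hubv => //; first by rewrite Eq mem_cat ws1.
    by rewrite in_setD1 yw qC // mem_cat inE eqxx orbT.
  exists (last a (s1 ++ y :: s2)).
    rewrite in_setD1 qC ?andbT; last by rewrite mem_cat last_cat /= mem_last orbT.
    by apply: contraNneq ws2 => <-; rewrite last_cat /= mem_last.
  split=> //.
  apply: (seq_conn (s := y :: s2)) => //.
  - by move: srt; rewrite sorted_cat_cons => /andP [].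
  - move=> z zs; rewrite in_setD1 qC ?mem_cat ?zs ?orbT // andbT.
    by apply: contraNneq ws2 => <-.
  - exact: mem_head.
  by rewrite last_cat /=; exact: mem_last.
(* w in s2: use prefix rcons s1 y containing a *)
have ws1 : w \notin s1.
  apply: contra hs1 => ws1; apply/hasP; exists w => //; by rewrite inE ws2 orbT.
have ar : a \in rcons s1 y.
  by case: s1 Eq {ys1 hs1 ws1 srt qC evb} => [|h t] /= [-> _];
    rewrite ?mem_head // mem_rcons inE eqxx orbT.
have aw : a != w.
  move: ar; rewrite mem_rcons inE => /orP [/eqP ->|as1] //.
  by apply: contraNneq ws1 => <-.
apply: hubv => //; first by rewrite Eq mem_cat inE ws2 !orbT.
  by rewrite in_setD1 yw qC // mem_cat inE eqxx orbT.
exists a; first by rewrite in_setD1 aw aC.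
split; first exact: eva.
apply: (seq_conn (s := rcons s1 y)) => //.
- by move: srt; rewrite sorted_cat_cons => /andP [].
- move=> z; rewrite mem_rcons inE => /orP [/eqP ->|zs].
    by rewrite in_setD1 yw qC // mem_cat inE eqxx orbT.
  rewrite in_setD1 qC ?mem_cat ?zs // andbT.
  by apply: contraNneq ws1 => <-.
- by rewrite mem_rcons mem_head.
Qed.

Lemma restr_path_in (T : finType) (e : rel T) (X : {set T}) a q :
  a \in X -> path (restr e X) a q -> {subset a :: q <= X} /\ path e a q.
Proof.
elim: q a => [|b q IH] a aX /=; first by split=> // z; rewrite inE => /eqP ->.
case/andP=> /and3P [_ bX eab] /(IH b bX) [sub pq]; split; last by rewrite eab.
by move=> z; rewrite inE => /orP [/eqP ->|/sub].
Qed.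

Lemma nbr_adj (T : finType) (e : rel T) (X : {set T}) v a b :
  symmetric e -> block_graph e -> v \notin X -> a \in X ->
  connect (restr e X) a b -> e v a -> e v b -> a != b -> e a b.
Proof.
move=> es hG vX aX /connectP [p pth ->] eva evb ab.
case: (shortenP pth) ab evb => q pq uq _ ab evb.
have [sub pe] := restr_path_in aX pq.
have vq : v \notin a :: q by apply: contra vX => /sub.
have [B bB /subsetP CB] := block_ext (cycle_nonsep es pe uq vq eva evb).
apply: (cliqueP (hG.2 _ bB)) ab; apply: CB; rewrite in_setU1 in_set.
  by rewrite mem_head orbT.
by rewrite mem_last orbT.
Qed.


Definition hinv (T : finType) (e : rel T) (X S : {set T}) : Prop :=
  [/\ S \subset X, (forall x y, x \in S -> y \in S -> ~~ e x y),
      (forall a b, a \in X -> b \in X -> connect (restr e X) a b) &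
      (forall B, is_block e B -> 1 < #|B :&: X| -> exists2 s, s \in S & s \in B)].

Lemma restr_mono (T : finType) (e : rel T) (X Y : {set T}) a b :
  X \subset Y -> connect (restr e X) a b -> connect (restr e Y) a b.
Proof.
move=> /subsetP XY; apply: connect_sub => x y /and3P [xX yX exy].
by apply: connect1; rewrite /restr /= !XY.
Qed.

Lemma exit_path (T : finType) (e : rel T) (X : {set T}) r p :
  symmetric e -> r \in X -> path e r p -> last r p \notin X ->
  exists2 v, v \notin X & [exists x in X, e v x].
Proof.
move=> es; elim: p r => [|z p IH] r rX /=; first by rewrite rX.
case/andP=> erz pz lz; have [zX|zX] := boolP (z \in X); first exact: IH zX pz lz.
by exists z => //; apply/existsP; exists r; rewrite rX es.
Qed.

Lemma find_v (T : finType) (e : rel T) (X : {set T}) :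
  symmetric e -> block_graph e -> #|X| < #|T| ->
  exists2 v, v \notin X & (X == set0) || [exists x in X, e v x].
Proof.
move=> es [hc _] lt.
have [y yX] : exists y, y \notin X.
  apply/existsP; apply: contraTT lt => /existsPn H; rewrite -leqNgt.
  suff -> : X = setT by rewrite cardsT.
  by apply/setP=> z; rewrite inE; move: (H z); rewrite negbK.
have [X0|/set0Pn [r rX]] := eqVneq X set0; first by exists y; rewrite // X0 eqxx.
have /connectP [p pth yE] := hc r y.
have [v vX ex] := exit_path es rX pth (ltac:(by rewrite -yE)).
by exists v => //; rewrite ex orbT.
Qed.

Lemma grow (T : finType) (e : rel T) : symmetric e -> irreflexive e -> block_graph e ->
  forall n, n <= #|T| -> exists X S : {set T}, #|X| = n /\ hinv e X S.
Proof.
move=> es ei hG; elim=> [|n IH] le.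
  exists set0, set0; split; first by rewrite cards0.
  split; [exact: sub0set | by move=> x y; rewrite inE | by move=> a b; rewrite inE |].
  by move=> B _; rewrite setI0 cards0.
have [X [S [cX [SX ind con hit]]]] := IH (ltnW le).
have [v vX vE] := @find_v T e X es hG (ltac:(by rewrite cX)).
pose S' := if [exists u in S, e v u] then S else v |: S.
exists (v |: X), S'; split; first by rewrite cardsU1 vX cX.
have SS' : S \subset S' by rewrite /S'; case: ifP => _; rewrite ?subxx ?subsetU1.
split.
- rewrite /S'; case: ifP => _; first by apply: subset_trans SX (subsetU1 _ _).
  by apply: setUS.
- rewrite /S'; case: ifPn => [_|/existsPn nE]; first exact: ind.
  move=> x y; rewrite !in_setU1 => /orP [/eqP ->|xS] /orP [/eqP ->|yS].
  + by rewrite ei.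
  + by move: (nE y); rewrite yS.
  + by rewrite es; move: (nE x); rewrite xS.
  + exact: ind.
- have conv : forall b, b \in X -> connect (restr e (v |: X)) v b.
    move=> b bX; move: vE; have -> : (X == set0) = false.
      by apply/negbTE/set0Pn; exists b.
    case/existsP=> x /andP [xX evx].
    apply: (connect_trans (y := x)).
      by apply: rstep; rewrite ?in_setU1 ?eqxx ?xX ?orbT.
    apply: restr_mono (con x b xX bX); exact: subsetU1.
  have cs := sym_connect_sym (restr_sym (v |: X) es).
  move=> a b; rewrite !in_setU1 => /orP [/eqP ->|aX] /orP [/eqP ->|bX].
  + exact: connect0.
  + exact: conv.
  + by rewrite cs; exact: conv.
  + exact: restr_mono (subsetU1 _ _) (con a b aX bX).
- move=> B bB; have [vB|vB] := boolP (v \in B); last first.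
    have -> : B :&: (v |: X) = B :&: X.
      by apply/setP=> z; rewrite !inE; case: eqP => // ->; rewrite (negbTE vB).
    by move=> /(hit B bB) [s sS sB]; exists s => //; apply: (subsetP SS').
  move=> c2.
  have [c1|c1] := ltnP 1 #|B :&: X|.
    by have [s sS sB] := hit B bB c1; exists s => //; apply: (subsetP SS').
  have [x xBX] : exists x, x \in B :&: X.
    apply/set0Pn; rewrite -card_gt0.
    have E : B :&: (v |: X) = v |: (B :&: X).
      by apply/setP=> z; rewrite !inE; case: eqP => // ->; rewrite vB.
    move: c2; rewrite E cardsU1; case: (_ \notin _) => /=; lia.
  move: xBX; rewrite inE => /andP [xB xX].
  have xv : x != v by apply: contraNneq vX => <-.
  rewrite /S'; case: ifPn => [/existsP [u /andP [uS evu]]|_]; last first.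
    by exists v; rewrite ?in_setU1 ?eqxx.
  exists u => //.
  have [B2 bB2 /andP [vB2 uB2]] := edge_block es ei hG evu.
  have uX : u \in X := subsetP SX u uS.
  have uv : u != v by apply: contraNneq vX => <-.
  have exu : (x == u) || e x u.
    have [xu|xu] := eqVneq x u => //=.
    apply: (nbr_adj es hG vX xX (con x u xX uX)) => //.
    by apply: (cliqueP (hG.2 _ bB)); rewrite // eq_sym.
  by rewrite (block_eq es hG bB bB2 vB vB2 xB uB2 xv uv exu).
Qed.

Lemma hitting_set (T : finType) (e : rel T) : symmetric e -> irreflexive e -> block_graph e ->
  exists S : {set T}, (forall x y, x \in S -> y \in S -> ~~ e x y) /\
    (forall B, is_block e B -> 1 < #|B| -> exists2 s, s \in S & s \in B).
Proof.
move=> es ei hG; have [X [S [cX [_ ind _ hit]]]] := grow es ei hG (leqnn #|T|).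
have XT : X = setT by apply/eqP; rewrite eqEcard cardsT cX leqnn andbT; apply: subsetT.
exists S; split=> // B bB cB; apply: hit => //; by rewrite XT setIT.
Qed.

Local Open Scope fset_scope.

Lemma sumsetP (A B : {fset nat}) z :
  reflect (exists a b, [/\ a \in A, b \in B & z = (a + b)%N]) (z \in sumset A B).
Proof.
apply: (iffP (imfset2P _ _ _ _ _)) => [[a aA [b bB ->]]|[a [b [aA bB ->]]]].
  by exists a, b.
by exists a => //; exists b.
Qed.

Lemma sumset_comm (A B : {fset nat}) : sumset A B = sumset B A.
Proof.
by apply/fsetP=> z; apply/sumsetP/sumsetP => -[a [b [aA bB ->]]];
  exists b, a; rewrite addnC.
Qed.

Lemma sumset_card0 (A B : {fset nat}) : #|` A| = 0%N -> #|` sumset A B| = 0%N.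
Proof.
move=> /eqP; rewrite cardfs_eq0 => /eqP A0; apply/eqP; rewrite cardfs_eq0.
apply/eqP/fsetP=> z; rewrite in_fset0; apply/negbTE/negP => /sumsetP [a [b [aA _ _]]].
by rewrite A0 in_fset0 in aA.
Qed.

Lemma seq_max (s : seq nat) : s != [::] -> exists2 m, m \in s & forall a, a \in s -> (a <= m)%N.
Proof.
elim: s => [//|x s IH] _.
case: s IH => [|y s] IH.
  by exists x; rewrite ?mem_head // => a; rewrite inE => /eqP ->.
have [m ms mmax] := IH isT.
have [xm|mx] := leqP x m.
  by exists m; [rewrite inE ms orbT | move=> a; rewrite inE => /orP [/eqP ->|/mmax]].
exists x; first exact: mem_head.
move=> a; rewrite inE => /orP [/eqP ->//|/mmax am]; lia.
Qed.

Lemma fset_max (A : {fset nat}) : (0 < #|` A|)%N ->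
  exists2 m, m \in A & forall a, a \in A -> (a <= m)%N.
Proof.
move=> A0; have : (A : seq nat) != [::].
  by apply: contraTneq A0 => E; rewrite E.
by move/seq_max.
Qed.

Lemma card_sumset_gt (A B : {fset nat}) :
  (0 < #|` A|)%N -> (1 < #|` B|)%N -> (#|` A| < #|` sumset A B|)%N.
Proof.
move=> A0 B1.
have [am amA amax] := fset_max A0.
have [b bB] : exists b, b \in B.
  by apply/fset0Pn; rewrite -cardfs_gt0; apply: ltnW.
have [b' b'B] : exists b', b' \in B `\ b.
  apply/fset0Pn; rewrite -cardfs_gt0; move: B1; rewrite (cardfsD1 b B) bB; lia.
move: b'B; rewrite in_fsetD1 => /andP [bb' b'B].
have key : forall b1 b2, b1 \in B -> b2 \in B -> (b1 < b2)%N -> (#|` A| < #|` sumset A B|)%N.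
  move=> b1 b2 b1B b2B lt.
  pose I := [fset (a + b1)%N | a in A].
  have cI : #|` I| = #|` A|.
    by apply/eqP/card_in_imfsetP => x y _ _ /eqP; rewrite eqn_add2r => /eqP.
  have IS : I `<=` sumset A B.
    apply/fsubsetP=> z /imfsetP [a /= aA ->]; apply/sumsetP; by exists a, b1.
  have nI : (am + b2)%N \notin I.
    apply/negP=> /imfsetP [a /= aA E]; have := amax a aA; lia.
  have sub : (am + b2)%N |` I `<=` sumset A B.
    rewrite fsubUset IS andbT fsub1set; apply/sumsetP; by exists am, b2.
  by have := fsubset_leq_card sub; rewrite cardfsU1 nI cI.
case: (ltngtP b b') => [lt|lt|eq]; [exact: key lt | exact: key lt |].
by rewrite eq eqxx in bb'.
Qed.

Lemma sumset11 a b : sumset [fset a] [fset b] = [fset (a + b)%N].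
Proof.
apply/fsetP=> z; rewrite in_fset1; apply/sumsetP/eqP => [[x [y [ ]]]|->].
  by rewrite !in_fset1 => /eqP -> /eqP ->.
by exists a, b; rewrite !in_fset1 !eqxx.
Qed.

Lemma sumset21 a b : sumset [fset a; a.+1] [fset b] = [fset (a + b)%N; (a + b).+1].
Proof.
apply/fsetP=> z; rewrite in_fset2; apply/sumsetP/idP => [[x [y [ ]]]|].
  by rewrite in_fset2 in_fset1 => /orP [] /eqP -> /eqP -> ->; rewrite ?addSn eqxx ?orbT.
case/orP=> /eqP ->; [exists a, b | exists a.+1, b]; by rewrite in_fset2 in_fset1 !eqxx ?orbT.
Qed.

Lemma logn2_sum i j : (i < j)%N -> logn 2 (2 ^ i + 2 ^ j) = i.
Proof.
move=> lt; have -> : (2 ^ i + 2 ^ j = 2 ^ i * (1 + 2 ^ (j - i)))%N.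
  by rewrite mulnDr muln1 -expnD subnKC // ltnW.
rewrite lognM ?expn_gt0 // pfactorK // logn_coprime ?addn0 //.
by rewrite coprime2n oddD oddX subn_eq0 leqNgt lt.
Qed.

Lemma pow2_pair_lt i j k l : (i < j)%N -> (k < l)%N ->
  (2 ^ i + 2 ^ j = 2 ^ k + 2 ^ l)%N -> i = k /\ j = l.
Proof.
move=> ij kl E.
have ik : i = k by rewrite -(logn2_sum ij) E logn2_sum.
subst k; split=> //; apply: (@expnI 2) => //; apply/eqP; move/eqP: E.
by rewrite eqn_add2l.
Qed.

Lemma pow2_pair i j k l : i != j -> k != l ->
  (2 ^ i + 2 ^ j = 2 ^ k + 2 ^ l)%N -> (i = k /\ j = l) \/ (i = l /\ j = k).
Proof.
move=> ij kl E.
case: (ltngtP i j) ij => [lij|lij|->]; rewrite ?eqxx // => _.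
- case: (ltngtP k l) kl => [lkl|lkl|->]; rewrite ?eqxx // => _.
  + by left; apply: pow2_pair_lt.
  + by right; apply: pow2_pair_lt; rewrite // E addnC.
- case: (ltngtP k l) kl => [lkl|lkl|->]; rewrite ?eqxx // => _.
  + by right; have [-> ->] : j = k /\ i = l by apply: pow2_pair_lt; rewrite // addnC.
  + by left; have [-> ->] : j = l /\ i = k by apply: pow2_pair_lt; rewrite // addnC E addnC.
Qed.

Local Open Scope fset_scope.

Definition lab (T : finType) (v : T) : nat := (2 ^ (enum_rank v))%N.
Definition labf (T : finType) (S : {set T}) (v : T) : {fset nat} :=
  if v \in S then [fset lab v; (lab v).+1] else [fset lab v].

Lemma rank_inj (T : finType) (a b : T) : (enum_rank a : nat) = enum_rank b -> a = b.
Proof. by move/val_inj/enum_rank_inj. Qed.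

Lemma lab_inj (T : finType) : injective (@lab T).
Proof. by move=> u v E; apply: rank_inj; apply: (@expnI 2). Qed.

Lemma labf_in (T : finType) (S : {set T}) v : lab v \in labf S v.
Proof. by rewrite /labf; case: ifP => _; rewrite ?in_fset2 ?in_fset1 eqxx. Qed.

Lemma labf_ge (T : finType) (S : {set T}) v z : z \in labf S v -> (lab v <= z)%N.
Proof.
rewrite /labf; case: ifP => _; rewrite ?in_fset2 ?in_fset1.
  by case/orP=> /eqP ->.
by move/eqP ->.
Qed.

Lemma labf_card (T : finType) (S : {set T}) v :
  #|` labf S v| = if v \in S then 2%N else 1%N.
Proof. by rewrite /labf; case: ifP => _; rewrite ?cardfs2 ?cardfs1 // (ltn_eqF (ltnSn _)). Qed.

Lemma sumset_ge (T : finType) (S : {set T}) u v z :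
  z \in sumset (labf S u) (labf S v) -> (lab u + lab v <= z)%N.
Proof.
case/sumsetP=> a [b [aA bB ->]]; apply: leq_add; [exact: (labf_ge aA) | exact: (labf_ge bB)].
Qed.

Lemma labf_weak (T : finType) (e : rel T) (S : {set T}) u v :
  (forall x y, x \in S -> y \in S -> ~~ e x y) -> e u v ->
  #|` sumset (labf S u) (labf S v)| = maxn #|` labf S u| #|` labf S v|.
Proof.
move=> ind euv; rewrite !labf_card.
have key : forall a b, a \notin S ->
   #|` sumset (labf S b) (labf S a)| = if b \in S then 2%N else 1%N.
  move=> a b aS; rewrite {2}/labf (negbTE aS); rewrite /labf; case: ifP => _.
    by rewrite sumset21 cardfs2 (ltn_eqF (ltnSn _)).
  by rewrite sumset11 cardfs1.
case: (boolP (u \in S)) => uS; case: (boolP (v \in S)) => vS.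
- by have := ind u v uS vS; rewrite euv.
- by rewrite key // uS.
- by rewrite sumset_comm key // vS.
- by rewrite key // (negbTE uS).
Qed.

Lemma labf_wIASI (T : finType) (e : rel T) (S : {set T}) :
  irreflexive e -> (forall x y, x \in S -> y \in S -> ~~ e x y) ->
  weak_IASI e (labf S).
Proof.
move=> ei ind; split; last by move=> u v; exact: labf_weak.
split.
  move=> u v E; apply: lab_inj; apply/eqP; rewrite eqn_leq.
  by rewrite (labf_ge (S := S) (v := v)) -?E ?labf_in // (labf_ge (S := S) (v := u)) ?E ?labf_in.
move=> u v x y euv exy E.
have sin : forall a b : T, (lab a + lab b)%N \in sumset (labf S a) (labf S b).
  by move=> a b; apply/sumsetP; exists (lab a), (lab b); rewrite !labf_in.
have Es : (lab u + lab v = lab x + lab y)%N.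
  apply/eqP; rewrite eqn_leq; apply/andP; split.
    by apply: (sumset_ge (S := S)); rewrite E; apply: sin.
  by apply: (sumset_ge (S := S)); rewrite -E; apply: sin.
have ne : forall a b : T, e a b -> (enum_rank a : nat) != enum_rank b.
  move=> a b eab; apply/eqP=> /rank_inj ab; subst b; by rewrite ei in eab.
case: (pow2_pair (ne _ _ euv) (ne _ _ exy) Es) => [[/rank_inj -> /rank_inj ->]|[/rank_inj -> /rank_inj ->]] //.
exact: setUC.
Qed.

Local Open Scope fset_scope.

Definition monoset (T : finType) (e : rel T) (f : T -> {fset nat}) :=
  [set [set u; v] | u in T, v in T & e u v && (#|` sumset (f u) (f v)| == 1%N)].

Lemma monosetP (T : finType) (e : rel T) (f : T -> {fset nat}) A :
  reflect (exists u v, [/\ e u v, #|` sumset (f u) (f v)| = 1%N & A = [set u; v]])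
    (A \in monoset e f).
Proof.
apply: (iffP imset2P) => [[u v _]|[u [v [euv c ->]]]].
  by rewrite !inE /= => /andP [euv /eqP c] ->; exists u, v.
by apply: (Imset2spec (x1 := u) (x2 := v)) => //; rewrite inE euv c eqxx.
Qed.

Definition Bp (T : finType) (f : T -> {fset nat}) (B : {set T}) :=
  B :&: [set x | #|` f x| == 1%N].

Lemma weak_no_two (T : finType) (e : rel T) (f : T -> {fset nat}) u v :
  weak_IASI e f -> e u v -> u != v -> #|` f u| != 1%N -> #|` f v| != 1%N -> False.
Proof.
move=> [[finj _] wk] euv uv fu fv.
have W := wk u v euv.
have [u0|u0] := eqVneq #|` f u| 0%N.
  have := W; rewrite sumset_card0 // u0 => /esym/eqP; rewrite max0n => v0.
  move: u0 v0 => /eqP; rewrite !cardfs_eq0 => /eqP u0 /eqP v0.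
  by move: uv; rewrite (finj u v) ?u0 ?v0 ?eqxx.
have [v0|v0] := eqVneq #|` f v| 0%N.
  have := W; rewrite sumset_comm sumset_card0 // v0 => /esym/eqP; rewrite maxn0 => u0'.
  by rewrite u0' in u0.
have [le|le] := leqP #|` f v| #|` f u|.
  have := @card_sumset_gt (f u) (f v) (ltac:(lia)) (ltac:(lia)).
  rewrite W; lia.
have := @card_sumset_gt (f v) (f u) (ltac:(lia)) (ltac:(lia)).
rewrite sumset_comm W; lia.
Qed.

Lemma Bp_lower (T : finType) (e : rel T) (f : T -> {fset nat}) B :
  block_graph e -> weak_IASI e f -> is_block e B -> (#|B| - 1 <= #|Bp f B|)%N.
Proof.
move=> hG wf bB.
have : (#|B :\: [set x | #|` f x| == 1%N]| <= 1)%N.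
  rewrite leqNgt; apply/negP=> /card_gt1P [x [y [xB yB xy]]].
  move: xB yB; rewrite !inE => /andP [fx xB] /andP [fy yB].
  exact: (weak_no_two wf (cliqueP (hG.2 _ bB) xB yB xy) xy fx fy).
have := cardsID [set x | #|` f x| == 1%N] B; rewrite /Bp; lia.
Qed.

Lemma blocks_share (T : finType) (e : rel T) u v B1 B2 :
  symmetric e -> block_graph e -> is_block e B1 -> is_block e B2 -> u != v ->
  u \in B1 -> v \in B1 -> u \in B2 -> v \in B2 -> B1 = B2.
Proof.
move=> es hG b1 b2 uv u1 v1 u2 v2.
by apply: (block_eq es hG b1 b2 u1 u2 v1 v2); rewrite 1?eq_sym // eqxx.
Qed.

Lemma monoset_block (T : finType) (e : rel T) (f : T -> {fset nat}) B :
  symmetric e -> irreflexive e -> block_graph e -> weak_IASI e f -> is_block e B ->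
  #|[set A in monoset e f | A \subset B]| = 'C(#|Bp f B|, 2).
Proof.
move=> es ei hG wf bB; rewrite -cards_draws; apply: eq_card => A.
rewrite !inE; apply/andP/andP.
  case=> /monosetP [u [v [euv c ->]]] sub.
  have uv : u != v by apply/eqP=> E; subst v; rewrite ei in euv.
  rewrite cards2 uv; split=> //.
  have W := wf.2 u v euv; rewrite c in W.
  have fu : #|` f u| = 1%N.
    have [u0|u0] := eqVneq #|` f u| 0%N; last by lia.
    by move: c; rewrite sumset_card0.
  have fv : #|` f v| = 1%N.
    have [v0|v0] := eqVneq #|` f v| 0%N; last by lia.
    by move: c; rewrite sumset_comm sumset_card0.
  apply/subsetP=> z; rewrite !inE => /orP [] /eqP ->; rewrite ?fu ?fv eqxx andbT;
    by apply: (subsetP sub); rewrite !inE eqxx ?orbT.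
case=> sub /cards2P [x [y [xy EA]]]; rewrite EA in sub *; split; last first.
  by apply: (subset_trans sub); exact: subsetIl.
have [xB yB] : x \in Bp f B /\ y \in Bp f B.
  by split; apply: (subsetP sub); rewrite !inE eqxx ?orbT.
move: xB yB; rewrite !inE => /andP [xB /eqP fx] /andP [yB /eqP fy].
have exy := cliqueP (hG.2 _ bB) xB yB xy.
apply/monosetP; exists x, y; split=> //.
by rewrite (wf.2 x y exy) fx fy.
Qed.

Lemma mono_sum (T : finType) (e : rel T) (f : T -> {fset nat}) :
  symmetric e -> irreflexive e -> block_graph e -> weak_IASI e f ->
  mono_count e f = (\sum_(B : {set T} | is_block e B) 'C(#|Bp f B|, 2))%N.
Proof.
move=> es ei hG wf.
pose blk (A : {set T}) := odflt setT [pick B | is_block e B && (A \subset B)].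
have blkP : forall A, A \in monoset e f ->
    is_block e (blk A) /\ forall B, is_block e B -> (A \subset B) = (blk A == B).
  move=> A /monosetP [u [v [euv _ ->]]].
  have uv : u != v by apply/eqP=> E; subst v; rewrite ei in euv.
  have [B0 b0 /andP [u0 v0]] := edge_block es ei hG euv.
  rewrite /blk; case: pickP => [B /andP [bB sB]|none]; last first.
    by move: (none B0); rewrite b0 /= subUset !sub1set u0 v0.
  move: sB; rewrite subUset !sub1set => /andP [uB vB].
  split=> // B' bB'; rewrite subUset !sub1set /=.
  apply/andP/eqP => [[uB' vB']|<-]; last by [].
  exact: (blocks_share es hG bB bB' uv).
have -> : mono_count e f = (\sum_(A in monoset e f) 1)%N by rewrite sum1_card.
rewrite (partition_big blk (fun B => is_block e B)); last by move=> A /blkP [].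
apply: eq_bigr => B bB; rewrite -(monoset_block es ei hG wf bB) -sum1_card.
apply: eq_bigl => A; rewrite !inE; case: (boolP (A \in monoset e f)) => //= AE.
by have [_ ->] := blkP A AE.
Qed.

Local Close Scope fset_scope.

Lemma bin2_mul m : ('C(m, 2) * 2 = m * m.-1)%N.
Proof.
elim: m => [//|m IH]; rewrite binS bin1 mulnDl IH; case: m {IH} => [//|m] /=; nia.
Qed.

Theorem theorem2p12 (T : finType) (e : rel T)
  (e_sym : symmetric e) (e_irr : irreflexive e)
  (hG : block_graph e) :
  (exists f : T -> {fset nat}, weak_IASI e f) /\
  is_sparing_number e
    ((\sum_(B : {set T} | is_block e B) (#|B| - 1) * (#|B| - 2)) %/ 2).
Proof.
have [S [ind hit]] := hitting_set e_sym e_irr hG.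
pose f := labf S.
have wf : weak_IASI e f := labf_wIASI e_irr ind.
pose K := (\sum_(B : {set T} | is_block e B) 'C(#|B| - 1, 2))%N.
have lower : forall g, weak_IASI e g -> (K <= mono_count e g)%N.
  move=> g wg; rewrite (mono_sum e_sym e_irr hG wg); apply: leq_sum => B bB.
  apply: leq_bin2l; exact: (Bp_lower hG wg bB).
have upper : (mono_count e f <= K)%N.
  rewrite (mono_sum e_sym e_irr hG wf); apply: leq_sum => B bB.
  have [lt|le] := ltnP 1 #|B|.
    have [s sS sB] := hit B bB lt.
    apply: leq_bin2l.
    have sub : Bp f B \subset B :\ s.
      apply/subsetP=> z; rewrite !inE => /andP [zB fz]; rewrite zB andbT.
      apply: contraTneq fz => ->; by rewrite /f labf_card sS.
    have := subset_leq_card sub; rewrite (cardsD1 s B) sB /=; lia.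
  rewrite bin_small //.
  have : (#|Bp f B| <= #|B|)%N by apply: subset_leq_card; exact: subsetIl.
  lia.
have E : K = ((\sum_(B : {set T} | is_block e B) (#|B| - 1) * (#|B| - 2)) %/ 2)%N.
  rewrite (eq_bigr (fun B : {set T} => 'C(#|B| - 1, 2) * 2)%N); last first.
    move=> B _; rewrite bin2_mul; congr (_ * _)%N; lia.
  by rewrite -big_distrl /= mulnK.
split; first by exists f.
rewrite -E; split; last exact: lower.
by exists f; split=> //; apply/eqP; rewrite eqn_leq upper lower.
Qed.
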